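(* Let $G$ consist of two parallel paths $P_1,P_2$ from $s$ to $d$ with $\mathrm{len}(P_1)<\mathrm{len}(P_2)$ (so $P_1$ is the unique shortest path), and let $l_v=0$ for all vertices $v$. Let $g\in\mathcal F$ be non-linear, i.e. $g(x)\ne x$ for some $x\in[0,1/2]$. Then there exist a factor $\lambda>1$ (depending on $g$ and the path lengths), an initial input $f_0>0$, and an initial configuration (positive pheromone levels on all edges and nonnegative initial flows) such that, with inputs $f_s(t)=b_d(t)=\lambda^t f_0$ for all $t\ge0$, the dynamics governed by $g$ satisfies that $\nu^f_{ss_1}(t)$ does not converge to $1$ as $t\to\infty$.
   Context: Model. Directed graph $G=(V,E)$ with source $s$, destination $d$; discrete time $t=0,1,\dots$; pheromone levels $p_{uv}(t)\ge0$ on edges, forward flows $f_v(t)\ge0$ and backward flows $b_v(t)\ge0$ at vertices; leakage parameters $l_v\in[0,1]$ and decay parameter $\delta\in(0,1)$. $f_s(t)$ and $b_d(t)$ are exogenous inputs. Flow update: for $v\ne s$, $f_v(t+1)=(1-l_v)\sum_{z:(z,v)\in E}f_{zv}(t)$; for $u\ne d$, $b_u(t+1)=(1-l_u)\sum_{z:(u,z)\in E}b_{uz}(t)$; pheromone update $p_{uv}(t+1)=\delta(p_{uv}(t)+f_{uv}(t)+b_{uv}(t))$. Normalized pheromone levels $\nu^f_{uv}(t)=p_{uv}(t)/\sum_{z:(u,z)\in E}p_{uz}(t)$, $\nu^b_{uv}(t)=p_{uv}(t)/\sum_{z:(z,v)\in E}p_{zv}(t)$. $\mathrm{len}(P)$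 is the number of edges of $P$. Two parallel paths: $G$ is the union of two directed paths $P_1,P_2$ from $s$ to $d$ sharing only $s$ and $d$; $s_1,s_2$ are the successors of $s$ and $d_1,d_2$ the predecessors of $d$ on $P_1,P_2$. Family $\mathcal F$: continuous, monotonically non-decreasing functions $g:[0,1/2]\to[0,1]$ with $g(0)=0$ and $g(1/2)=1/2$. The dynamics governed by $g$: at every vertex of out-degree (resp. in-degree) one, the entire forward (resp. backward) flow goes along the unique edge; at $s$, with $x=\min(\nu^f_{ss_1}(t),\nu^f_{ss_2}(t))$, the edge attaining the minimum receives forward flow $g(x)f_s(t)$ and the other edge receives $(1-g(x))f_s(t)$ (if $x=1/2$ each receives $f_s(t)/2$); at $d$ the backward flow $b_d(t)$ is split between $(d_1,d)$ and $(d_2,d)$ in the same way using $\nu^b_{d_1d}(t),\nu^b_{d_2d}(t)$. The linear decision rule corresponds to $g(x)=x$. *)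

(* Defs.v *)
From Stdlib Require Import Reals Lra.
Open Scope R_scope.

(** The graph G is the union of two directed s-d paths P1, P2 of lengths
  [L1] and [L2] (number of edges) sharing only s and d.
  On path [i], the vertices are numbered 0 .. len i, with vertex 0 = s and
  vertex [len i] = d; vertices 1 .. len i - 1 are the internal vertices.
  Edge [k] of path [i] (0 <= k < len i) goes from vertex k to vertex k+1.
  So edge 0 is (s, s_i) and edge [len i - 1] is (d_i, d). *)

Inductive pid : Type := P1 | P2.

Definition other (i : pid) : pid := match i with P1 => P2 | P2 => P1 end.

Definition len (L1 L2 : nat) (i : pid) : nat :=
  match i with P1 => L1 | P2 => L2 end.

(** Configuration at a time step:
   - [pher i k] : pheromone level p on edge k of path i;
   - [fv i k], [bv i k] : forward / backward flow at internal vertex k of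
     path i (1 <= k < len i).  (Other indices are irrelevant junk.) *)
Record config : Type := Config {
  pher : pid -> nat -> R;
  fv   : pid -> nat -> R;
  bv   : pid -> nat -> R }.

(** Family F: g : [0,1/2] -> [0,1] continuous, non-decreasing,
    g(0) = 0, g(1/2) = 1/2.  (g is given as a total function R -> R; only
    its values on [0,1/2] matter.) *)
Definition in_F (g : R -> R) : Prop :=
  (forall x, 0 <= x <= 1/2 -> 0 <= g x <= 1) /\
  (forall x, 0 <= x <= 1/2 -> forall eps, 0 < eps -> exists dl, 0 < dl /\
      forall y, 0 <= y <= 1/2 -> Rabs (y - x) < dl -> Rabs (g y - g x) < eps) /\
  (forall x y, 0 <= x <= 1/2 -> 0 <= y <= 1/2 -> x <= y -> g x <= g y) /\
  g 0 = 0 /\ g (1/2) = 1/2.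

Definition split_frac (g : R -> R) (nu_self nu_other : R) : R :=
  if Rlt_dec nu_self nu_other then g nu_self
  else if Rlt_dec nu_other nu_self then 1 - g nu_other
  else 1/2.

Section Dynamics.
Variables (L1 L2 : nat) (delta : R) (g : R -> R) (l : pid -> nat -> R).

Definition nu_f (c : config) (i : pid) : R :=
  pher c i 0 / (pher c P1 0 + pher c P2 0).

Definition nu_b (c : config) (i : pid) : R :=
  pher c i (len L1 L2 i - 1)%nat /
  (pher c P1 (len L1 L2 P1 - 1)%nat + pher c P2 (len L1 L2 P2 - 1)%nat).

Definition fedge (c : config) (fs : R) (i : pid) (k : nat) : R :=
  if Nat.eqb k 0 then split_frac g (nu_f c i) (nu_f c (other i)) * fs
  else fv c i k.

Definition bedge (c : config) (bd : R) (i : pid) (k : nat) : R :=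
  if Nat.eqb k (len L1 L2 i - 1)%nat
  then split_frac g (nu_b c i) (nu_b c (other i)) * bd
  else bv c i (S k).

Definition step (c : config) (fs bd : R) : config :=
  Config
    (fun i k => delta * (pher c i k + fedge c fs i k + bedge c bd i k))
    (fun i k => (1 - l i k) * fedge c fs i (k - 1)%nat)
    (fun i k => (1 - l i k) * bedge c bd i k).

Fixpoint traj (fs bd : nat -> R) (c0 : config) (t : nat) : config :=
  match t with
  | O => c0
  | S t' => step (traj fs bd c0 t') (fs t') (bd t')
  end.

End Dynamics.

(* Main.v *)
Require Import Defs.
From Stdlib Require Import Reals Lra Lia.
Open Scope R_scope.

Lemma split_compl g x y : x + y = 1 -> split_frac g x y + split_frac g y x = 1.
Proof.
  intros H; unfold split_frac.
  destruct (Rlt_dec x y); destruct (Rlt_dec y x); try lra; destruct (Rlt_dec x y); lra.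


Qed.

Lemma split_range g : in_F g -> forall x y, 0 <= x -> 0 <= y -> x + y = 1 ->
  0 <= split_frac g x y <= 1.
Proof.
  intros [Hr _] x y Hx Hy Hs; unfold split_frac.
  destruct (Rlt_dec x y).
  - apply Hr; lra.
  - destruct (Rlt_dec y x).
    + assert (0 <= g y <= 1) by (apply Hr; lra). lra.
    + lra.
Qed.

Lemma share a p q : 0 < p -> 0 < q -> a * p <= (1 - a) * q -> a <= q / (p + q).
Proof.
  intros Hp Hq H.
  assert (E : q / (p + q) - a = ((1 - a) * q - a * p) * / (p + q)) by (field; lra).
  assert (0 <= ((1 - a) * q - a * p) * / (p + q)).
  { apply Rmult_le_pos; [lra|]. left; apply Rinv_0_lt_compat; lra. }
  lra.
Qed.

Lemma nusum p q : 0 < p -> 0 < q -> p / (p + q) + q / (p + q) = 1.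
Proof. intros; field; lra. Qed.

Lemma nupos p q : 0 < p -> 0 < q -> 0 <= p / (p + q).
Proof. intros; unfold Rdiv; apply Rmult_le_pos; [lra|]. left; apply Rinv_0_lt_compat; lra. Qed.

Lemma key_ineq a b L M f1 b1 f2 b2 : 0 < a < 1 -> 0 < M -> 0 <= L ->
  f1 <= (1 - b) * L -> b1 <= (1 - b) * L -> b * L <= f2 -> b * L <= b2 * M ->
  M * (2 * a * (1 - b)) <= b * (1 - a) * (1 + M) ->
  a * (f1 + b1) <= (1 - a) * (f2 + b2).
Proof.
  intros Ha HM HL H1 H2 H3 H4 H5.
  apply Rmult_le_reg_r with M; [lra|].
  assert (a * (f1 + b1) * M <= a * (2 * (1 - b) * L) * M).
  { apply Rmult_le_compat_r; [lra|]. apply Rmult_le_compat_l; lra. }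
  assert (L * (M * (2 * a * (1 - b))) <= L * (b * (1 - a) * (1 + M))).
  { apply Rmult_le_compat_l; lra. }
  assert ((1 - a) * (b * L * M) <= (1 - a) * (f2 * M)).
  { apply Rmult_le_compat_l; [lra|]. apply Rmult_le_compat_r; lra. }
  assert ((1 - a) * (b * L) <= (1 - a) * (b2 * M)).
  { apply Rmult_le_compat_l; lra. }
  nra.
Qed.

Definition Inv (L1 L2 : nat) (a b lam : R) (c : config) (Lt : R) : Prop :=
 (forall i k, (k < len L1 L2 i)%nat -> 0 < pher c i k) /\
 a * pher c P1 0 <= (1 - a) * pher c P2 0 /\
 a * pher c P1 (L1 - 1) <= (1 - a) * pher c P2 (L2 - 1) /\
 (forall k, (1 <= k < L1)%nat -> 0 <= fv c P1 k /\ fv c P1 k * lam ^ k <= (1 - b) * Lt /\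
     0 <= bv c P1 k /\ bv c P1 k * lam ^ (L1 - k) <= (1 - b) * Lt) /\
 (forall k, (1 <= k < L2)%nat -> b * Lt <= fv c P2 k * lam ^ k /\
     b * Lt <= bv c P2 k * lam ^ (L2 - k)).

Section Pres.
Variables (L1 L2 : nat) (delta : R) (g : R -> R) (a b lam : R).
Hypothesis HL1 : (1 <= L1)%nat.
Hypothesis HL12 : (L1 < L2)%nat.
Hypothesis Hd : 0 < delta.
Hypothesis Hg : in_F g.
Hypothesis Ha : 0 < a < 1.
Hypothesis Hb : 0 < b <= 1.
Hypothesis Hlam : 1 < lam.
Hypothesis Hspl : forall x y, 0 <= x -> a <= y -> x + y = 1 -> b <= split_frac g y x.
Hypothesis Hkey : lam ^ (L2 - 1) * (2 * a * (1 - b)) <= b * (1 - a) * (1 + lam ^ (L2 - 1)).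

Lemma lampos n : 0 < lam ^ n.
Proof. apply pow_lt; lra. Qed.

Lemma lamge1 n : 1 <= lam ^ n.
Proof. apply pow_R1_Rle; lra. Qed.

Lemma splits (p q : R) : 0 < p -> 0 < q -> a * p <= (1 - a) * q ->
  0 <= split_frac g (p / (p + q)) (q / (p + q)) <= 1 - b /\
  b <= split_frac g (q / (p + q)) (p / (p + q)) <= 1.
Proof.
  intros Hp Hq H.
  pose proof (share a p q Hp Hq H) as Hs.
  pose proof (nusum p q Hp Hq) as E.
  pose proof (nupos p q Hp Hq) as P1p.
  pose proof (nupos q p Hq Hp) as P2p. rewrite Rplus_comm in P2p.
  pose proof (split_compl g (p / (p + q)) (q / (p + q)) E) as C.
  pose proof (split_range g Hg (p / (p + q)) (q / (p + q)) P1p P2p E) as R1.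
  assert (E' : q / (p + q) + p / (p + q) = 1) by lra.
  pose proof (split_range g Hg (q / (p + q)) (p / (p + q)) P2p P1p E') as R2.
  pose proof (Hspl (p / (p + q)) (q / (p + q)) P1p Hs E) as S.
  lra.
Qed.

Section Edges.
Variables (c : config) (Lt : R).
Hypothesis HI : Inv L1 L2 a b lam c Lt.
Hypothesis HLt : 0 < Lt.

Lemma edgeP1 k : (k < L1)%nat ->
  0 <= fedge g c Lt P1 k /\ fedge g c Lt P1 k * lam ^ k <= (1 - b) * Lt /\
  0 <= bedge L1 L2 g c Lt P1 k /\ bedge L1 L2 g c Lt P1 k * lam ^ (L1 - 1 - k) <= (1 - b) * Lt.
Proof.
  intros Hk. destruct HI as (Hp & Hf & Hb' & H1 & H2).
  assert (Sf := splits (pher c P1 0) (pher c P2 0) (Hp P1 0%nat ltac:(simpl; lia))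
     (Hp P2 0%nat ltac:(simpl; lia)) Hf).
  assert (Sb := splits (pher c P1 (L1 - 1)) (pher c P2 (L2 - 1)) (Hp P1 (L1 - 1)%nat ltac:(simpl; lia))
     (Hp P2 (L2 - 1)%nat ltac:(simpl; lia)) Hb').
  split; [|split; [|split]].
  - unfold fedge. destruct k as [|k]; simpl.
    + apply Rmult_le_pos; unfold nu_f; simpl; lra.
    + apply (H1 (S k) ltac:(lia)).
  - unfold fedge. destruct k as [|k]; simpl.
    + unfold nu_f; simpl. nra.
    + apply (H1 (S k) ltac:(lia)).
  - unfold bedge; simpl. destruct (Nat.eqb_spec k (L1 - 1)).
    + apply Rmult_le_pos; unfold nu_b; simpl; lra.
    + apply (H1 (S k) ltac:(lia)).
  - unfold bedge; simpl. destruct (Nat.eqb_spec k (L1 - 1)).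
    + subst k. replace (L1 - 1 - (L1 - 1))%nat with 0%nat by lia. simpl.
      unfold nu_b; simpl. nra.
    + replace (L1 - 1 - k)%nat with (L1 - S k)%nat by lia. apply (H1 (S k) ltac:(lia)).
Qed.

Lemma edgeP2 k : (k < L2)%nat ->
  b * Lt <= fedge g c Lt P2 k * lam ^ k /\
  b * Lt <= bedge L1 L2 g c Lt P2 k * lam ^ (L2 - 1 - k).
Proof.
  intros Hk. destruct HI as (Hp & Hf & Hb' & H1 & H2).
  assert (Sf := splits (pher c P1 0) (pher c P2 0) (Hp P1 0%nat ltac:(simpl; lia))
     (Hp P2 0%nat ltac:(simpl; lia)) Hf).
  assert (Sb := splits (pher c P1 (L1 - 1)) (pher c P2 (L2 - 1)) (Hp P1 (L1 - 1)%nat ltac:(simpl; lia))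
     (Hp P2 (L2 - 1)%nat ltac:(simpl; lia)) Hb').
  split.
  - unfold fedge. destruct k as [|k]; simpl.
    + unfold nu_f; simpl. nra.
    + apply (H2 (S k) ltac:(lia)).
  - unfold bedge; simpl. destruct (Nat.eqb_spec k (L2 - 1)).
    + subst k. replace (L2 - 1 - (L2 - 1))%nat with 0%nat by lia. simpl.
      unfold nu_b; simpl. nra.
    + replace (L2 - 1 - k)%nat with (L2 - S k)%nat by lia. apply (H2 (S k) ltac:(lia)).
Qed.

End Edges.

Lemma pres c Lt : Inv L1 L2 a b lam c Lt -> 0 < Lt ->
  Inv L1 L2 a b lam (step L1 L2 delta g (fun _ _ => 0) c Lt Lt) (lam * Lt).
Proof.
  intros HI HLt.
  pose proof (edgeP1 c Lt HI HLt) as E1.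
  pose proof (edgeP2 c Lt HI HLt) as E2.
  destruct HI as (Hp & Hf & Hb' & H1 & H2).
  assert (Hbl : 0 < b * Lt) by nra.
  assert (E2' : forall k, (k < L2)%nat -> 0 <= fedge g c Lt P2 k /\ 0 <= bedge L1 L2 g c Lt P2 k).
  { intros k Hk. destruct (E2 k Hk) as [X Y].
    pose proof (lampos k). pose proof (lampos (L2 - 1 - k)). split; nra. }
  unfold Inv; cbn [pher fv bv step].
  split; [|split; [|split; [|split]]].
  - intros [|] k Hk; simpl in Hk.
    + destruct (E1 k Hk) as (X1 & _ & X2 & _). specialize (Hp P1 k Hk). apply Rmult_lt_0_compat; lra.
    + destruct (E2' k Hk) as (X1 & X2). specialize (Hp P2 k Hk). apply Rmult_lt_0_compat; lra.
  - destruct (E1 0%nat ltac:(lia)) as (X1 & X2 & X3 & X4).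
    destruct (E2 0%nat ltac:(lia)) as (Y1 & Y2).
    rewrite Nat.sub_0_r in X4, Y2. simpl in X2, Y1.
    pose proof (lamge1 (L1 - 1)).
    assert (be1 : bedge L1 L2 g c Lt P1 0 <= (1 - b) * Lt) by nra.
    assert (K := key_ineq a b Lt (lam ^ (L2 - 1)) (fedge g c Lt P1 0) (bedge L1 L2 g c Lt P1 0)
       (fedge g c Lt P2 0) (bedge L1 L2 g c Lt P2 0) Ha (lampos _) ltac:(lra) ltac:(lra) be1
       ltac:(lra) Y2 Hkey).
    nra.
  - destruct (E1 (L1 - 1)%nat ltac:(lia)) as (X1 & X2 & X3 & X4).
    destruct (E2 (L2 - 1)%nat ltac:(lia)) as (Y1 & Y2).
    replace (L1 - 1 - (L1 - 1))%nat with 0%nat in X4 by lia.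
    replace (L2 - 1 - (L2 - 1))%nat with 0%nat in Y2 by lia. simpl in X4, Y2.
    pose proof (lamge1 (L1 - 1)).
    assert (fe1 : fedge g c Lt P1 (L1 - 1) <= (1 - b) * Lt) by nra.
    assert (K := key_ineq a b Lt (lam ^ (L2 - 1)) (bedge L1 L2 g c Lt P1 (L1 - 1)) (fedge g c Lt P1 (L1 - 1))
       (bedge L1 L2 g c Lt P2 (L2 - 1)) (fedge g c Lt P2 (L2 - 1)) Ha (lampos _) ltac:(lra) ltac:(lra) fe1
       ltac:(lra) Y1 Hkey).
    nra.
  - intros k Hk. rewrite Rminus_0_r, !Rmult_1_l.
    destruct k as [|k]; [lia|].
    replace (S k - 1)%nat with k by lia.
    destruct (E1 k ltac:(lia)) as (X1 & X2 & _).
    destruct (E1 (S k) ltac:(lia)) as (_ & _ & X3 & X4).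
    replace (L1 - S k)%nat with (S (L1 - 1 - S k)) by lia. simpl pow.
    split; [lra|split; [nra|split; [lra|nra]]].
  - intros k Hk. rewrite Rminus_0_r, !Rmult_1_l.
    destruct k as [|k]; [lia|].
    replace (S k - 1)%nat with k by lia.
    destruct (E2 k ltac:(lia)) as (X1 & _).
    destruct (E2 (S k) ltac:(lia)) as (_ & X4).
    replace (L2 - S k)%nat with (S (L2 - 1 - S k)) by lia. simpl pow.
    split; nra.
Qed.

End Pres.

Lemma final (L1 L2 : nat) (delta : R) (g : R -> R) (a b : R) :
  (1 <= L1)%nat -> (L1 < L2)%nat -> 0 < delta < 1 -> in_F g ->
  0 < a < 1 -> a < b <= 1 ->
  (forall x y, 0 <= x -> a <= y -> x + y = 1 -> b <= split_frac g y x) ->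
  exists (lam f0 : R) (c0 : config),
    1 < lam /\ 0 < f0 /\
    (forall i k, (k < len L1 L2 i)%nat -> 0 < pher c0 i k) /\
    (forall i k, (1 <= k < len L1 L2 i)%nat -> 0 <= fv c0 i k /\ 0 <= bv c0 i k) /\
    ~ Un_cv (fun t : nat =>
          nu_f (traj L1 L2 delta g (fun _ _ => 0)
                  (fun t => lam ^ t * f0) (fun t => lam ^ t * f0) c0 t) P1)
        1.
Proof.
  intros HL1 HL12 Hd Hg Ha Hb Hspl.
  set (B := b * (1 - a)).
  set (cst := 2 * a * (1 - b) - B).
  set (D := Rmax cst (B / 2)).
  assert (HB : 0 < B) by (unfold B; nra).
  assert (HcB : cst < B) by (unfold cst, B; nra).
  assert (HD : 0 < D) by (unfold D; pose proof (Rmax_r cst (B/2)); lra).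
  assert (HDB : D < B) by (unfold D; apply Rmax_lub_lt; lra).
  assert (HcD : cst <= D) by (unfold D; apply Rmax_l).
  set (K := B / D).
  assert (HK : 1 < K).
  { unfold K. apply Rmult_lt_reg_r with D; [lra|]. unfold Rdiv. rewrite Rmult_assoc, Rinv_l; lra. }
  assert (HKD : K * D = B) by (unfold K; field; lra).
  set (n := (L2 - 1)%nat).
  assert (Hn : (0 < INR n)) by (apply lt_0_INR; unfold n; lia).
  set (lam := Rpower K (/ INR n)).
  assert (Hlam : 1 < lam).
  { unfold lam. rewrite <- (Rpower_O K) by lra. apply Rpower_lt; [lra|].
    apply Rinv_0_lt_compat; lra. }
  assert (Hlamn : lam ^ n = K).
  { rewrite <- Rpower_pow by lra. unfold lam. rewrite Rpower_mult, Rinv_l by lra.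
    apply Rpower_1; lra. }
  assert (Hkey : lam ^ (L2 - 1) * (2 * a * (1 - b)) <= b * (1 - a) * (1 + lam ^ (L2 - 1))).
  { fold n. rewrite Hlamn. fold B.
    assert (K * cst <= K * D) by (apply Rmult_le_compat_l; lra).
    unfold cst in *. nra. }
  set (c0 := Config (fun i _ => match i with P1 => 1 - a | P2 => a end)
                    (fun i _ => match i with P1 => 0 | P2 => 1 end)
                    (fun i _ => match i with P1 => 0 | P2 => 1 end)).
  assert (Hinv : forall t, Inv L1 L2 a b lam
      (traj L1 L2 delta g (fun _ _ => 0) (fun t => lam ^ t * 1) (fun t => lam ^ t * 1) c0 t)
      (lam ^ t * 1)).
  { induction t as [|t IH].
    - unfold Inv; simpl. split; [|split; [|split; [|split]]].
      + intros [|] k _; lra.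
      + nra.
      + nra.
      + intros k _. pose proof (lamge1 lam Hlam k). pose proof (lamge1 lam Hlam (L1 - k)). nra.
      + intros k _. pose proof (lamge1 lam Hlam k). pose proof (lamge1 lam Hlam (L2 - k)). nra.
    - simpl traj. replace (lam ^ S t * 1) with (lam * (lam ^ t * 1)) by (simpl; ring).
      apply pres; try assumption; try lra.
      pose proof (lampos lam Hlam t). lra. }
  exists lam, 1, c0.
  split; [lra|split; [lra|split; [|split]]].
  - intros [|] k _; simpl; lra.
  - intros [|] k _; simpl; lra.
  - intros HU. destruct (HU a ltac:(lra)) as [N HN].
    specialize (HN N (le_n N)). unfold R_dist in HN.
    destruct (Hinv N) as (Hp & Hf & _).
    set (c := traj L1 L2 delta g (fun _ _ => 0) (fun t => lam ^ t * 1) (fun t => lam ^ t * 1) c0 N) in *.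
    assert (H1 := Hp P1 0%nat ltac:(simpl; lia)).
    assert (H2 := Hp P2 0%nat ltac:(simpl; lia)).
    pose proof (share a _ _ H1 H2 Hf).
    pose proof (nusum _ _ H1 H2).
    unfold nu_f in HN.
    rewrite Rabs_left in HN; lra.
Qed.

Theorem proposition3 (L1 L2 : nat) (delta : R) (g : R -> R) :
  (1 <= L1)%nat -> (L1 < L2)%nat ->
  0 < delta < 1 ->
  in_F g ->
  (exists x, 0 <= x <= 1/2 /\ g x <> x) ->
  exists (lam f0 : R) (c0 : config),
    1 < lam /\ 0 < f0 /\
    (forall i k, (k < len L1 L2 i)%nat -> 0 < pher c0 i k) /\
    (forall i k, (1 <= k < len L1 L2 i)%nat -> 0 <= fv c0 i k /\ 0 <= bv c0 i k) /\
    ~ Un_cv (fun t : nat =>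
          nu_f (traj L1 L2 delta g (fun _ _ => 0)
                  (fun t => lam ^ t * f0) (fun t => lam ^ t * f0) c0 t) P1)
        1.
Proof.
  intros HL1 HL12 Hd Hg [x0 [Hx0 Hgx]].
  pose proof Hg as (Hr & _ & Hm & Hg0 & Hg12).
  assert (Hx0' : 0 < x0 < 1/2).
  { split; destruct (Req_dec x0 0); destruct (Req_dec x0 (1/2)); subst; try lra. }
  destruct (Rdichotomy _ _ Hgx) as [Hlt|Hgt].
  -
    pose proof (Hr x0 ltac:(lra)).
    apply (final L1 L2 delta g (1 - x0) (1 - g x0)); try assumption; try lra.
    intros x y Hx Hy Hs. unfold split_frac.
    destruct (Rlt_dec y x); [lra|].
    destruct (Rlt_dec x y); [|lra].
    assert (g x <= g x0) by (apply Hm; lra). lra.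
  -
    assert (g x0 <= 1/2) by (rewrite <- Hg12; apply Hm; lra).
    apply (final L1 L2 delta g x0 (g x0)); try assumption; try lra.
    intros x y Hx Hy Hs. unfold split_frac.
    destruct (Rlt_dec y x).
    + apply Hm; lra.
    + destruct (Rlt_dec x y); [|lra].
      assert (g x <= 1/2) by (rewrite <- Hg12; apply Hm; lra). lra.
Qed.
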